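(* Let $a,b\in\mathcal{R}$ with $\mathrm{ord}(a)=i$, $\mathrm{ord}(b)=j$ and $i\ge j\ge0$, let $d\in\mathcal{M}$ be a common divisor of $\mathrm{top}(a)$ and $\mathrm{top}(b)$ in $\mathcal{M}$, and let $a',b'\in\mathcal{M}$ satisfy $\mathrm{top}(a)=a'd$ and $\mathrm{top}(b)=b'd$. Then: (1) $\mathrm{top}(b)^{i-j}b'a=cb+c'$ for some $c\in\mathcal{R}$ with $\mathrm{ord}(c)=i-j$ and some $c'\in\mathcal{R}$ with $\mathrm{ord}(c')<j$; (2) $a\,\mathrm{top}(b)^{i-j}b'=bc+c'$ for some $c\in\mathcal{R}$ with $\mathrm{ord}(c)=i-j$ and some $c'\in\mathcal{R}$ with $\mathrm{ord}(c')<j$.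
   Context: Let $\mathrm{Hol}$ be the space of holomorphic functions on the upper half plane, $q=e^{2\pi iz}$, $f'=\frac{1}{2\pi i}\frac{df}{dz}$, and $E_2,E_4,E_6$ the Eisenstein series with constant term $1$. For $k\in\mathbb{R}$ let $D_kf=f'-\frac{k}{12}E_2f$. Let $H=\bigoplus_{n\in\mathbb{R}}H_n$ where each $H_n$ is a copy of $\mathrm{Hol}$, elements written $(f,n)$, with product $(f,n)(g,m)=(fg,n+m)$. $\mathrm{End}^i(H)$ denotes the $\mathbb{C}$-linear maps sending each $H_n$ into $H_{n+i}$ and $\mathrm{End}(H)=\bigoplus_i\mathrm{End}^i(H)$. Define $\delta(f,n)=(D_nf,n+2)$, $e_4(f,n)=(E_4f,n+4)$, $e_6(f,n)=(E_6f,n+6)$; $\mathcal{R}$ is the $\mathbb{C}$-subalgebra of $\mathrm{End}(H)$ generated by $\delta,e_4,e_6$. The ring $\mathcal{M}=\mathbb{C}[E_4,E_6]$ of level-one holomorphic modular forms is identified with the subalgebra of $\mathcal{R}$ generated by $e_4,e_6$ via $E_4\mapsto e_4$, $E_6\mapsto e_6$ (a modular form $g$ of weight $w$ acts by $(f,n)\mapsto(gf,n+w)$). Every nonzero $a\in\mathcal{R}$ has a unique expression $a=a_n\delta^n+\cdots+a_1\delta+a_0$ with $a_i\in\mathcal{M}$ and $a_n\neq0$; then $\mathrm{top}(a)=a_n$ and $\mathrm{ord}(a)=n$. For $a=0$, $\mathrm{top}(a)=0$ and $\mathrm{ord}(a)=-\infty$. *)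

(* Defs.v *)
From HB Require Import structures.
From mathcomp Require Import all_boot all_order all_algebra.
From mathcomp Require Import complex.
From mathcomp Require Import mpoly.
Set Implicit Arguments. Unset Strict Implicit. Unset Printing Implicit Defensive.
Import Order.TTheory GRing.Theory Num.Theory.
Local Open Scope ring_scope.

Section DiffOps.
Variable R : rcfType.
Definition Cx := complex R.

(* M = C[E4, E6]; E4, E6 are algebraically independent, so M is the
   polynomial ring in two variables: 'X_0 <-> E4, 'X_1 <-> E6. *)
Definition Mf := {mpoly Cx[2]}.
Definition iE4 : 'I_2 := ord0.
Definition iE6 : 'I_2 := ord_max.
Definition E4 : Mf := 'X_iE4.
Definition E6 : Mf := 'X_iE6.

(* The Serre derivative on M (weight-k piece: f |-> f' - k/12 E2 f); it is
   the derivation determined by  theta E4 = - E6 / 3,  theta E6 = - E4^2 / 2. *)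
Definition theta (p : Mf) : Mf :=
  - ((3%:R : Cx)^-1 *: (E6 * mderiv iE4 p))
  - ((2%:R : Cx)^-1 *: (E4 ^+ 2 * mderiv iE6 p)).

(* Elements of the operator algebra R are represented by their unique normal
   form  a_n delta^n + ... + a_1 delta + a_0  (a_k in M): the polynomial
   sum_k a_k 'X^k in {poly M}. *)
Definition Rop := {poly Mf}.

Definition ofM (g : Mf) : Rop := g%:P.

(* left multiplication by delta, using  delta o g = g o delta + theta(g) *)
Definition dleft (B : Rop) : Rop := 'X * B + map_poly theta B.

Definition rmul (A B : Rop) : Rop :=
  \sum_(n < size A) (A`_n)%:P * iter n dleft B.

(* ord : None stands for -infinity (a = 0) *)
Definition ord (a : Rop) : option nat :=
  if a == 0 then None else Some (size a).-1.
Definition top (a : Rop) : Mf := lead_coef a.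

Definition ord_lt (o : option nat) (j : nat) : bool :=
  if o is Some n then (n < j)%N else true.

End DiffOps.

(* Main.v *)
Require Import Defs.
From HB Require Import structures.
From mathcomp Require Import all_boot all_order all_algebra.
From mathcomp Require Import complex.
From mathcomp Require Import mpoly.
From mathcomp Require Import ring.
Import GRing.Theory.
Local Open Scope ring_scope.

Lemma thetaE {R : rcfType} (p : Mf R) : theta p =
  - (((3%:R : Cx R)^-1)%:MP * (E6 R * mderiv iE4 p))
  - (((2%:R : Cx R)^-1)%:MP * (E4 R ^+ 2 * mderiv iE6 p)).
Proof. by rewrite /theta !mul_mpolyC. Qed.

Lemma thetaB {R : rcfType} (x y : Mf R) : theta (x - y) = theta x - theta y.
Proof. rewrite !thetaE !mderivB. ring. Qed.

Lemma theta0 {R : rcfType} : theta (0 : Mf R) = 0.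
Proof. by move: (thetaB (0 : Mf R) 0); rewrite !subrr. Qed.

Lemma thetaD {R : rcfType} (x y : Mf R) : theta (x + y) = theta x + theta y.
Proof.
have hN : forall z : Mf R, theta (- z) = - theta z.
  by move=> z; rewrite -sub0r thetaB theta0 sub0r.
by move: (thetaB x (- y)); rewrite opprK hN opprK.
Qed.

Lemma thetaM {R : rcfType} (x y : Mf R) : theta (x * y) = theta x * y + x * theta y.
Proof. rewrite !thetaE !mderivM. ring. Qed.

Definition gdleft {K : idomainType} (th : K -> K) (B : {poly K}) : {poly K} :=
  'X * B + map_poly th B.
Definition grmul {K : idomainType} (th : K -> K) (A B : {poly K}) : {poly K} :=
  \sum_(n < size A) (A`_n)%:P * iter n (gdleft th) B.

Section Gen.
Variable K : idomainType.
Variable th : K -> K.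
Hypothesis thB : forall x y, th (x - y) = th x - th y.
Hypothesis thM : forall x y, th (x * y) = th x * y + x * th y.

Lemma th0 : th 0 = 0.
Proof. by move: (thB 0 0); rewrite !subrr. Qed.

Lemma th1 : th 1 = 0.
Proof.
have h := thM 1 1; rewrite !mul1r ?mulr1 in h.
have h2 : th 1 + th 1 - th 1 = th 1 - th 1 by rewrite -h.
by rewrite addrK subrr in h2.
Qed.

Lemma coef_mapth (x : {poly K}) n : (map_poly th x)`_n = th x`_n.
Proof. exact: coef_map_id0 th0. Qed.

Lemma gmapB (x y : {poly K}) : map_poly th (x - y) = map_poly th x - map_poly th y.
Proof. by apply/polyP => n; rewrite coefB !coef_mapth coefB thB. Qed.

Lemma gdleftB (x y : {poly K}) : gdleft th (x - y) = gdleft th x - gdleft th y.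
Proof. rewrite /gdleft gmapB. ring. Qed.

Lemma gdleft0 : gdleft th 0 = 0.
Proof. by move: (gdleftB 0 0); rewrite !subrr. Qed.

Lemma iterB n (x y : {poly K}) : iter n (gdleft th) (x - y) = iter n (gdleft th) x - iter n (gdleft th) y.
Proof. by elim: n => //= n ->; rewrite gdleftB. Qed.

Lemma iter0 n : iter n (gdleft th) 0 = 0.
Proof. by elim: n => //= n ->; rewrite gdleft0. Qed.

Lemma gdleftD (x y : {poly K}) : gdleft th (x + y) = gdleft th x + gdleft th y.
Proof.
have hN : forall z, gdleft th (- z) = - gdleft th z.
  by move=> z; rewrite -sub0r gdleftB gdleft0 sub0r.
by move: (gdleftB x (- y)); rewrite opprK hN opprK.
Qed.

Lemma gdleftCM (g : K) (Y : {poly K}) :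
  gdleft th (g%:P * Y) = g%:P * gdleft th Y + (th g)%:P * Y.
Proof.
rewrite /gdleft.
have -> : map_poly th (g%:P * Y) = g%:P * map_poly th Y + (th g)%:P * Y.
  by apply/polyP => n; rewrite coefD !coefCM !coef_mapth coefCM thM; ring.
ring.
Qed.

Lemma gdleft_size (Z : {poly K}) k : (size Z <= k)%N -> (size (gdleft th Z) <= k.+1)%N.
Proof.
move/leq_sizeP => h; apply/leq_sizeP => l hl.
rewrite /gdleft coefD coefXM coef_mapth.
case: l hl => // l hl /=; rewrite !h ?th0 ?addr0 //; exact: ltnW.
Qed.

Lemma gdleft_coef (Z : {poly K}) k : (size Z <= k.+1)%N -> (gdleft th Z)`_k.+1 = Z`_k.
Proof.
move/leq_sizeP => h.
by rewrite /gdleft coefD coefXM coef_mapth /= (h k.+1) // th0 addr0.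
Qed.

Lemma iter_top (Y : {poly K}) M n : (size Y <= M.+1)%N ->
  (size (iter n (gdleft th) Y) <= (M + n).+1)%N /\ (iter n (gdleft th) Y)`_(M + n) = Y`_M.
Proof.
move=> hY; elim: n => [|n [h1 h2]] /=; first by rewrite addn0.
by rewrite addnS; split; [exact: gdleft_size | rewrite gdleft_coef].
Qed.

Lemma grmul_bound (A B : {poly K}) k : (size A <= k)%N ->
  grmul th A B = \sum_(n < k) (A`_n)%:P * iter n (gdleft th) B.
Proof.
move=> hk; rewrite /grmul (big_ord_widen k (fun n => (A`_n)%:P * iter n (gdleft th) B) hk).
rewrite big_mkcond; apply: eq_bigr => n _; case: ifP => // /negbT.
by rewrite -leqNgt => h; rewrite nth_default // mul0r.
Qed.

Lemma grmulB (A B C : {poly K}) : grmul th (A - B) C = grmul th A C - grmul th B C.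
Proof.
set k := maxn (size A) (size B).
have hA : (size A <= k)%N by rewrite leq_maxl.
have hB : (size B <= k)%N by rewrite leq_maxr.
have hAB : (size (A - B)%R <= k)%N by rewrite (leq_trans (size_polyD _ _)) // size_polyN.
rewrite !(@grmul_bound _ C _ hA) !(@grmul_bound _ C _ hB) !(@grmul_bound _ C _ hAB) -sumrB.
by apply: eq_bigr => n _; rewrite coefB polyCB mulrBl.
Qed.

Lemma grmul0l (C : {poly K}) : grmul th 0 C = 0.
Proof. by rewrite /grmul size_poly0 big_ord0. Qed.

Lemma grmulD (A B C : {poly K}) : grmul th (A + B) C = grmul th A C + grmul th B C.
Proof.
have hN : forall Z, grmul th (- Z) C = - grmul th Z C.
  by move=> Z; rewrite -sub0r grmulB grmul0l sub0r.
by move: (grmulB A (- B) C); rewrite opprK hN opprK.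
Qed.

Lemma grmulCM (g : K) (Y C : {poly K}) : grmul th (g%:P * Y) C = g%:P * grmul th Y C.
Proof.
have h : (size (g%:P * Y)%R <= size Y)%N.
  by apply/leq_sizeP => l hl; rewrite coefCM nth_default // mulr0.
rewrite (@grmul_bound _ C _ h) /grmul mulr_sumr; apply: eq_bigr => n _.
by rewrite coefCM polyCM mulrA.
Qed.

Lemma grmul1l (C : {poly K}) : grmul th 1 C = C.
Proof. by rewrite /grmul size_poly1 big_ord1 /= coefC /= mul1r. Qed.

Lemma grmulC (g : K) (C : {poly K}) : grmul th g%:P C = g%:P * C.
Proof. by rewrite -{1}[g%:P]mulr1 grmulCM grmul1l. Qed.

Lemma gdleft_sum (I : Type) (r : seq I) (P : pred I) (F : I -> {poly K}) :
  gdleft th (\sum_(i <- r | P i) F i) = \sum_(i <- r | P i) gdleft th (F i).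
Proof. exact: (big_morph _ gdleftD gdleft0). Qed.

Lemma grmul_sum (I : Type) (r : seq I) (P : pred I) (F : I -> {poly K}) C :
  grmul th (\sum_(i <- r | P i) F i) C = \sum_(i <- r | P i) grmul th (F i) C.
Proof. exact: (big_morph (fun x => grmul th x C) (fun x y => grmulD x y C) (grmul0l C)). Qed.

Lemma grmul_dleft (A B : {poly K}) : grmul th (gdleft th A) B = gdleft th (grmul th A B).
Proof.
have hs : (size (gdleft th A) <= (size A).+1)%N by exact: gdleft_size.
rewrite (@grmul_bound _ B _ hs) /grmul gdleft_sum.
under [RHS]eq_bigr do rewrite gdleftCM.
rewrite big_split /=.
under eq_bigr do rewrite /gdleft coefD coef_mapth polyCD mulrDl.
rewrite big_split /= big_ord_recl big_ord_recr /= coefXM /= mul0r add0r.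
rewrite nth_default // th0 mul0r addr0; congr (_ + _).
by apply: eq_bigr => n _; rewrite coefXM /=.
Qed.

Lemma grmul_iter n (A B : {poly K}) : grmul th (iter n (gdleft th) A) B = iter n (gdleft th) (grmul th A B).
Proof. by elim: n => //= n <-; rewrite grmul_dleft. Qed.

Lemma grmul_assoc (A B C : {poly K}) : grmul th (grmul th A B) C = grmul th A (grmul th B C).
Proof.
rewrite [grmul th A B]/grmul grmul_sum [RHS]/grmul; apply: eq_bigr => n _.
by rewrite grmulCM grmul_iter.
Qed.

Lemma grmulBr (A x y : {poly K}) : grmul th A (x - y) = grmul th A x - grmul th A y.
Proof. by rewrite /grmul -sumrB; apply: eq_bigr => n _; rewrite iterB mulrBr. Qed.

Lemma grmul0r (A : {poly K}) : grmul th A 0 = 0.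
Proof. by move: (grmulBr A 0 0); rewrite !subrr. Qed.

Lemma grmulDr (A x y : {poly K}) : grmul th A (x + y) = grmul th A x + grmul th A y.
Proof.
have hN : forall Z, grmul th A (- Z) = - grmul th A Z.
  by move=> Z; rewrite -sub0r grmulBr grmul0r sub0r.
by move: (grmulBr A x (- y)); rewrite opprK hN opprK.
Qed.

Lemma iterX n : iter n (gdleft th) 1 = 'X^n.
Proof.
elim: n => //= n ->; rewrite /gdleft.
have -> : map_poly th 'X^n = 0.
  by apply/polyP => l; rewrite coef_mapth coefXn coef0; case: (l == n); rewrite ?th1 ?th0.
by rewrite addr0 exprS.
Qed.

Lemma grmul1r (A : {poly K}) : grmul th A 1 = A.
Proof.
rewrite -[RHS]coefK poly_def /grmul; apply: eq_bigr => n _.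
by rewrite iterX mul_polyC.
Qed.

Lemma grmul_top (A B : {poly K}) N M : (size A <= N.+1)%N -> (size B <= M.+1)%N ->
  (size (grmul th A B) <= (N + M).+1)%N /\ (grmul th A B)`_(N + M) = A`_N * B`_M.
Proof.
move=> hA hB; rewrite (@grmul_bound _ B _ hA) big_ord_recr /=.
have [s1 c1] := @iter_top B M N hB.
have hlow : forall n : 'I_N, (size ((A`_n)%:P * iter n (gdleft th) B)%R <= N + M)%N.
  move=> n; have [s2 _] := @iter_top B M n hB.
  rewrite (leq_trans (size_mul_leq _ _)) // (leq_trans _ (leq_trans s2 _)) //.
    by rewrite size_polyC; case: (_ != 0) => /=; rewrite ?add1n ?add0n ?leq_pred.
  by rewrite addnC ltn_add2r.
split.
  rewrite (leq_trans (size_polyD _ _)) // geq_max; apply/andP; split.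
    rewrite (leq_trans (size_sum _ _ _)) //.
    apply/bigmax_leqP => n _; exact: (leq_trans (hlow n)).
  have s1' : (size (iter N (gdleft th) B) <= (N + M).+1)%N by rewrite addnC.
  rewrite (leq_trans (size_mul_leq _ _)) // size_polyC.
  by case: (_ != 0) => /=; rewrite ?add1n ?add0n // (leq_trans (leq_pred _)).
rewrite coefD coef_sum big1 ?add0r; last first.
  by move=> n _; apply/leq_sizeP; first exact: hlow.
by rewrite coefCM addnC c1.
Qed.

Arguments grmul_top {A B N M}.

Lemma size_XmC (c : K) m : (size (c%:P * 'X^m)%R <= m.+1)%N.
Proof.
apply/leq_sizeP => l hl; rewrite coefCM coefXn.
by case: eqP => [e|_]; [rewrite e ltnn in hl | rewrite mulr0].
Qed.

Lemma coef_XmC (c : K) m : (c%:P * 'X^m)`_m = c.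
Proof. by rewrite coefCM coefXn eqxx mulr1. Qed.

Lemma size_le_eq0 (p : {poly K}) n : (size p <= n.+1)%N -> p`_n = 0 -> (size p <= n)%N.
Proof.
move=> h1 h2; apply/leq_sizeP => l hl.
case: (ltngtP l n) hl => // [hnl _|-> _ //].
by apply/leq_sizeP: hnl.
Qed.

Lemma ldiv (b : {poly K}) j (hb : size b = j.+1) m : forall p : {poly K},
  (size p <= j + m)%N -> exists q : {poly K}, (size q <= m)%N /\
  (size ((lead_coef b ^+ m)%:P * p - grmul th q b)%R <= j)%N.
Proof.
set t := lead_coef b.
have tE : t = b`_j by rewrite /t /lead_coef hb.
have hb' : (size b <= j.+1)%N by rewrite hb.
elim: m => [|m IH] p hp.
  by exists 0; rewrite size_poly0 grmul0l expr0 polyC1 mul1r subr0 -(addn0 j).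
set c := p`_(j + m).
set r := t%:P * p - grmul th (c%:P * 'X^m) b.
have hr : (size r <= j + m)%N.
  have [s1 c1] := grmul_top (size_XmC c m) hb'.
  apply: size_le_eq0.
    rewrite (leq_trans (size_polyD _ _)) // size_polyN geq_max; apply/andP; split.
      by rewrite (leq_trans (size_mul_leq _ _)) // size_polyC; case: (_ != 0); rewrite /= ?add1n ?add0n -?addnS // (leq_trans (leq_pred _)) // -addnS.
    by rewrite addnC.
  by rewrite coefB coefCM addnC c1 coef_XmC -/c addnC -tE mulrC subrr.
have [q' [hq' hq'2]] := IH r hr.
exists (q' + (t ^+ m)%:P * (c%:P * 'X^m)); split.
  rewrite (leq_trans (size_polyD _ _)) // geq_max (leq_trans hq') //=.
  rewrite (leq_trans (size_mul_leq _ _)) // size_polyC.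
  by case: (_ != 0); rewrite /= ?add1n ?add0n ?size_XmC // (leq_trans (leq_pred _)) // size_XmC.
suff -> : (t ^+ m.+1)%:P * p - grmul th (q' + (t ^+ m)%:P * (c%:P * 'X^m)) b =
          (t ^+ m)%:P * r - grmul th q' b by [].
rewrite grmulD grmulCM /r exprS polyCM; ring.
Qed.

Arguments ldiv {b j} hb {m}.

Lemma rdiv (b : {poly K}) j (hb : size b = j.+1) m : forall p : {poly K},
  (size p <= j + m)%N -> exists q : {poly K}, (size q <= m)%N /\
  (size (grmul th p (lead_coef b ^+ m)%:P - grmul th b q)%R <= j)%N.
Proof.
set t := lead_coef b.
have tE : t = b`_j by rewrite /t /lead_coef hb.
have hb' : (size b <= j.+1)%N by rewrite hb.
have hC : forall g : K, (size g%:P <= 0.+1)%N by move=> g; rewrite size_polyC leq_b1.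
elim: m => [|m IH] p hp.
  by exists 0; rewrite size_poly0 grmul0r expr0 polyC1 grmul1r subr0 -(addn0 j).
set c := p`_(j + m).
set w := c%:P * 'X^m.
set r := grmul th p t%:P - grmul th b w.
have hr : (size r <= j + m)%N.
  have [s1 c1] := grmul_top (size_XmC c m) hb'.
  have [s2 c2] := grmul_top hb' (size_XmC c m).
  have hp' : (size p <= (j + m).+1)%N by rewrite -addnS.
  have [s3 c3] := grmul_top (hp' : (size p <= (j + m).+1)%N) (hC t).
  rewrite addn0 in s3 c3.
  apply: size_le_eq0.
    rewrite (leq_trans (size_polyD _ _)) // size_polyN geq_max; apply/andP; split.
      by [].
    exact: s2.
  by rewrite /r /w coefB c3 c2 coefC eqxx coef_XmC -tE mulrC subrr.
have [q' [hq' hq'2]] := IH r hr.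
exists (q' + grmul th w (t ^+ m)%:P); split.
  rewrite (leq_trans (size_polyD _ _)) // geq_max (leq_trans hq') //=.
  by have [s4 _] := grmul_top (size_XmC c m) (hC (t ^+ m)); rewrite addn0 in s4.
suff -> : grmul th p (t ^+ m.+1)%:P - grmul th b (q' + grmul th w (t ^+ m)%:P) =
          grmul th r (t ^+ m)%:P - grmul th b q' by [].
rewrite /r grmulB !grmul_assoc grmulC -polyCM -exprS grmulDr; ring.
Qed.

Arguments rdiv {b j} hb {m}.

Theorem gmain (a b : {poly K}) (i j : nat) (d a' b' : K) :
  size a = i.+1 -> size b = j.+1 -> (j <= i)%N ->
  lead_coef a = a' * d -> lead_coef b = b' * d ->
  (exists c c' : {poly K},
      grmul th ((lead_coef b ^+ (i - j) * b')%:P) a = grmul th c b + c'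
      /\ size c = (i - j).+1 /\ (size c' <= j)%N)
  /\
  (exists c c' : {poly K},
      grmul th a ((lead_coef b ^+ (i - j) * b')%:P) = grmul th b c + c'
      /\ size c = (i - j).+1 /\ (size c' <= j)%N).
Proof.
move=> ha hb hji hla hlb.
set k := (i - j)%N.
have ik : i = (j + k)%N by rewrite /k subnKC.
set t := lead_coef b.
have tE : t = b`_j by rewrite /t /lead_coef hb.
have aE : lead_coef a = a`_i by rewrite /lead_coef ha.
have hb' : (size b <= j.+1)%N by rewrite hb.
have ha' : (size a <= i.+1)%N by rewrite ha.
have hC : forall g : K, (size g%:P <= 0.+1)%N by move=> g; rewrite size_polyC leq_b1.
have tn0 : t != 0 by rewrite lead_coef_eq0 -size_poly_eq0 hb.
have a'n0 : a' != 0.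
  apply/eqP => e; move/eqP: hla; rewrite e mul0r lead_coef_eq0 -size_poly_eq0 ha //.
have tkn0 : t ^+ k * a' != 0 by rewrite mulf_neq0 // expf_neq0.
have sizeEq : forall c : {poly K}, (size c <= k.+1)%N -> c`_k != 0 -> size c = k.+1.
  move=> c h1 h2; apply/anti_leq; rewrite h1 /= ltnNge; apply/negP => /leq_sizeP h.
  by move: h2; rewrite h ?eqxx.
split.
  set r0 := b'%:P * a - grmul th (a'%:P * 'X^k) b.
  have hr0 : (size r0 <= j + k)%N.
    have [s1 c1] := grmul_top (size_XmC a' k) hb'.
    rewrite -ik; apply: size_le_eq0.
      rewrite (leq_trans (size_polyD _ _)) // size_polyN geq_max; apply/andP; split.
        rewrite (leq_trans (size_mul_leq _ _)) // size_polyC.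
        by case: (_ != 0); rewrite /= ?add1n ?add0n // (leq_trans (leq_pred _)).
      by rewrite ik addnC.
    have e : (k + j)%N = i by rewrite ik addnC.
    rewrite e in c1.
    by rewrite /r0 coefB coefCM c1 coef_XmC -aE -tE hla /t hlb; ring.
  have [q' [hq' hq'2]] := @ldiv _ _ hb _ _ hr0.
  exists ((t ^+ k * a')%:P * 'X^k + q'), ((t ^+ k)%:P * r0 - grmul th q' b).
  split; last split => //.
    rewrite grmulC grmulD /r0.
    have -> : grmul th ((t ^+ k * a')%:P * 'X^k) b = (t ^+ k)%:P * grmul th (a'%:P * 'X^k) b.
      by rewrite polyCM -mulrA grmulCM.
    rewrite polyCM; ring.
  apply: sizeEq.
    rewrite (leq_trans (size_polyD _ _)) // geq_max size_XmC /=.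
    exact: leq_trans hq' _.
  by rewrite coefD coef_XmC (leq_sizeP _ _ hq') // addr0.
set r0 := grmul th a b'%:P - grmul th b (a'%:P * 'X^k).
have hr0 : (size r0 <= j + k)%N.
  have [s1 c1] := grmul_top hb' (size_XmC a' k).
  have [s2 c2] := grmul_top ha' (hC b').
  rewrite -ik; apply: size_le_eq0.
    rewrite (leq_trans (size_polyD _ _)) // size_polyN geq_max; apply/andP; split.
      by rewrite -(addn0 i).
    by rewrite ik.
  by rewrite coefB -{1}(addn0 i) c2 ik c1 coef_XmC coefC eqxx -ik -aE -tE /t hla hlb; ring.
have [q' [hq' hq'2]] := @rdiv _ _ hb _ _ hr0.
exists (grmul th (a'%:P * 'X^k) (t ^+ k)%:P + q'), (grmul th r0 (t ^+ k)%:P - grmul th b q').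
split; last split => //.
  have -> : (t ^+ k * b')%:P = grmul th b'%:P (t ^+ k)%:P by rewrite grmulC -polyCM mulrC.
  rewrite -grmul_assoc.
  have -> : grmul th a b'%:P = r0 + grmul th b (a'%:P * 'X^k) by rewrite /r0 subrK.
  rewrite grmulD grmul_assoc grmulDr; ring.
have [s4 c4] := grmul_top (size_XmC a' k) (hC (t ^+ k)); rewrite addn0 in s4 c4.
apply: sizeEq.
  rewrite (leq_trans (size_polyD _ _)) // geq_max s4 /=.
  exact: leq_trans hq' _.
by rewrite coefD c4 coef_XmC coefC eqxx (leq_sizeP _ _ hq') // addr0 mulrC.
Qed.

End Gen.

Lemma ord_size {R : rcfType} (a : Rop R) i : ord a = Some i -> size a = i.+1.
Proof.
rewrite /ord; case: eqP => // /eqP an0 [<-].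
by rewrite prednK // size_poly_gt0.
Qed.

Lemma size_ord {R : rcfType} (c : Rop R) k : size c = k.+1 -> ord c = Some k.
Proof.
move=> h; rewrite /ord; case: eqP => [e|_]; first by rewrite e size_poly0 in h.
by rewrite h.
Qed.

Lemma size_ordlt {R : rcfType} (c : Rop R) j : (size c <= j)%N -> ord_lt (ord c) j.
Proof.
rewrite /ord; case: eqP => //= /eqP cn0 h.
by apply: leq_trans h; rewrite prednK // size_poly_gt0.
Qed.

Theorem theorem3p9 (R : rcfType) (a b : Rop R) (i j : nat) (d a' b' : Mf R) :
  ord a = Some i -> ord b = Some j -> (j <= i)%N ->
  top a = a' * d -> top b = b' * d ->
  (exists c c' : Rop R,
      rmul (ofM (top b ^+ (i - j) * b')) a = rmul c b + c'
      /\ ord c = Some (i - j)%N /\ ord_lt (ord c') j)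
  /\
  (exists c c' : Rop R,
      rmul a (ofM (top b ^+ (i - j) * b')) = rmul b c + c'
      /\ ord c = Some (i - j)%N /\ ord_lt (ord c') j).
Proof.
move=> ha hb hji hla hlb.
have g := @gmain (Mf R) (@theta R) (@thetaB R) (@thetaM R) a b i j d a' b'
    (ord_size _ _ ha) (ord_size _ _ hb) hji hla hlb.
case: g => [[c [c' [e [s1 s2]]]] [c2 [c2' [e2 [s3 s4]]]]].
split.
  exists c, c'; split; first exact_no_check e.
  by split; [exact: size_ord | exact: size_ordlt].
exists c2, c2'; split; first exact_no_check e2.
by split; [exact: size_ord | exact: size_ordlt].
Qed.
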